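(* Let $X=\{x_1,\dots,x_M\}\subset\mathbb{R}^n$ be finite and $\phi_1,\dots,\phi_N$ real functions on $X$ such that the matrix $V$, $V_{i,j}=\phi_j(x_i)$, has rank $N$. Then: (i) $w^*\in\mathbb{R}^M_{\geq0}$ solves Problem 1 if and only if it solves Problem 2; (ii) $z^*\in\mathbb{R}^M$ solves Problem 3 if and only if $w^*:=(z_1^{*2},\dots,z_M^{*2})$ solves Problem 1. In either case, $w^*$ is a D-optimal design for $\Phi=\{\phi_1,\dots,\phi_N\}$ on $X$ (supported on $\{x_i: w^*_i>0\}$).
   Context: Let $G(w)=V^t\operatorname{diag}(w)V$ for $w\in\mathbb{R}^M$. Problem 1: find $w^*\in\mathbb{R}^M_{\geq0}$ maximizing $\det G(w)$ over $\{w\in\mathbb{R}^M_{\geq0}:\|w\|_1=1\}$; a solution is called a D-optimal design. Problem 2: find $w^*\in\mathbb{R}^M_{\geq0}$ minimizing $E(w)=-\frac1N\log\det G(w)+\|w\|_1$ over $\mathbb{R}^M_{\geq0}$ (with $E=+\infty$ where $\det G(w)=0$). Problem 3: find $z^*\in\mathbb{R}^M$ minimizing $F(z)=E((z_1^2,\dots,z_M^2))=-\frac1N\log\det G((z_1^2,\dots,z_M^2))+\|z\|_2^2$ over $\mathbb{R}^M$ (with $F=+\infty$ where the determinant vanishes). *)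

(* Defs.v *)
From HB Require Import structures.
From mathcomp Require Import all_boot all_order all_algebra.
From mathcomp Require Import reals ereal exp.
Set Implicit Arguments. Unset Strict Implicit. Unset Printing Implicit Defensive.
Import Order.TTheory GRing.Theory Num.Theory.
Local Open Scope ring_scope.

Section Design.
Variables (R : realType) (M N : nat) (V : 'M[R]_(M, N)).

Definition Gmx (w : 'rV[R]_M) : 'M[R]_N := V^T *m diag_mx w *m V.

Definition nonneg (w : 'rV[R]_M) : Prop := forall i, 0 <= w 0 i.

Definition norm1 (w : 'rV[R]_M) : R := \sum_i `|w 0 i|.
Definition norm2sq (z : 'rV[R]_M) : R := \sum_i (z 0 i) ^+ 2.

Definition sqv (z : 'rV[R]_M) : 'rV[R]_M := \row_i (z 0 i) ^+ 2.

Definition feasible1 (w : 'rV[R]_M) : Prop := nonneg w /\ norm1 w = 1.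
Definition solves1 (w : 'rV[R]_M) : Prop :=
  feasible1 w /\ forall w', feasible1 w' -> \det (Gmx w') <= \det (Gmx w).

Definition D_optimal (w : 'rV[R]_M) : Prop := solves1 w.

Definition Efun (w : 'rV[R]_M) : \bar R :=
  if \det (Gmx w) == 0 then +oo%E
  else (- (N%:R)^-1 * ln (\det (Gmx w)) + norm1 w)%:E.
Definition solves2 (w : 'rV[R]_M) : Prop :=
  nonneg w /\ forall w', nonneg w' -> (Efun w <= Efun w')%E.

Definition Ffun (z : 'rV[R]_M) : \bar R := Efun (sqv z).
Definition solves3 (z : 'rV[R]_M) : Prop :=
  forall z', (Ffun z <= Ffun z')%E.

End Design.

(* Main.v *)
From HB Require Import structures.
From mathcomp Require Import all_boot all_order all_algebra.
From mathcomp Require Import reals ereal exp.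
From mathcomp Require Import lra.
Require Import Defs.
Import Order.TTheory GRing.Theory Num.Theory.
Local Open Scope ring_scope.
Set Implicit Arguments. Unset Strict Implicit.

Section Aux.
Variable R : realType.

Lemma sqsum0 k (f : 'I_k -> R) : \sum_i f i * f i = 0 -> forall i, f i = 0.
Proof.
move=> h i.
have H : forall j : 'I_k, xpredT j -> 0 <= f j * f j by move=> j _; rewrite -expr2 sqr_ge0.
have := psumr_eq0P H h (erefl true) (i := i).
by move/eqP; rewrite mulf_eq0 orbb => /eqP.
Qed.

Lemma gram_ge0 m n (B : 'M[R]_(m, n)) : 0 <= \det (B^T *m B).
Proof.
elim: n B => [|n IH] B; first by rewrite det_mx00.
suff H : forall B' : 'M[R]_(m, 1 + n), 0 <= \det (B'^T *m B') by exact: (H B).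
move=> {}B.
have [b [C eB]] : exists (b : 'cV[R]_m) (C : 'M[R]_(m, n)), B = row_mx b C.
  by exists (lsubmx B), (rsubmx B); rewrite hsubmxK.
set beta := (b^T *m b) 0 0.
have bb : b^T *m b = beta%:M by rewrite [LHS]mx11_scalar.
have beta_ge0 : 0 <= beta.
  rewrite /beta mxE; apply: sumr_ge0 => k _; rewrite mxE -expr2 sqr_ge0 //.
set X := beta^-1 *: (b^T *m C).
set C' := C - b *m X.
have orth : b^T *m C' = 0.
  have [b0|bn0] := eqVneq beta 0.
    have : b = 0.
      have hs : \sum_k b k 0 * b k 0 = 0.
        apply: etrans b0; rewrite /beta mxE; apply: eq_bigr => k _; rewrite mxE //.
      apply/matrixP => i j; rewrite (ord1 j) [RHS]mxE.
      exact: (sqsum0 hs i).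
    by move=> ->; rewrite trmx0 mul0mx.
  rewrite /C' mulmxBr mulmxA bb mul_scalar_mx /X scalerA mulfV // scale1r subrr //.
set E : 'M[R]_(1 + n) := block_mx 1%:M (- X) 0 1%:M.
have BE : B *m E = row_mx b C'.
  rewrite eB /E mul_row_block !mulmx1 !mulmx0 addr0 mulmxN addrC //.
have detE : \det E = 1 by rewrite /E det_ublock !det1 mulr1.
have : \det (B^T *m B) = \det ((B *m E)^T *m (B *m E)).
  by rewrite trmx_mul mulmxA -[E^T *m B^T *m B]mulmxA !det_mulmx det_tr detE mulr1 mul1r.
move->; rewrite BE tr_row_mx mul_col_row orth.
have orth' : C'^T *m b = 0 by rewrite -[b]trmxK -trmx_mul orth trmx0.
rewrite orth' det_ublock bb det_scalar expr1.
by apply: mulr_ge0 => //; apply: IH.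
Qed.

Lemma ln_le1 (x : R) : 0 < x -> ln x <= x - 1.
Proof.
move=> x0; have := expR_ge1Dx (ln x); rewrite lnK ?posrE //; lra.
Qed.

Lemma invN_mul (N : nat) (x : R) : (0 < N)%N -> N%:R^-1 * (x *+ N) = x.
Proof.
move=> hN; rewrite -[x *+ N]mulr_natr mulrCA mulVf ?mulr1 // pnatr_eq0 -lt0n hN //.
Qed.

Variables (M N : nat) (V : 'M[R]_(M, N)).

Lemma Gmx_ge0 w : nonneg w -> 0 <= \det (Gmx V w).
Proof.
move=> hw; pose s := \row_i Num.sqrt (w 0 i).
have -> : Gmx V w = (diag_mx s *m V)^T *m (diag_mx s *m V).
  rewrite trmx_mul tr_diag_mx /Gmx -!mulmxA; congr (_ *m _).
  rewrite mulmxA mulmx_diag; congr (diag_mx _ *m _).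
  by apply/matrixP => i j; rewrite (ord1 i) !mxE -expr2 sqr_sqrtr.
exact: gram_ge0.
Qed.

Lemma GmxZ c w : Gmx V (c *: w) = c *: Gmx V w.
Proof.
rewrite /Gmx; have -> : diag_mx (c *: w) = c *: diag_mx w.
  by apply/matrixP => i j; rewrite !mxE mulrnAr.
by rewrite scalemxAl scalemxAr.
Qed.

Lemma detGZ c w : \det (Gmx V (c *: w)) = c ^+ N * \det (Gmx V w).
Proof. by rewrite GmxZ detZ. Qed.

Lemma norm1Z c (w : 'rV[R]_M) : norm1 (c *: w) = `|c| * norm1 w.
Proof. by rewrite /norm1 mulr_sumr; apply: eq_bigr => i _; rewrite mxE normrM. Qed.

Lemma norm1_ge0 (w : 'rV[R]_M) : 0 <= norm1 w.
Proof. by apply: sumr_ge0 => i _. Qed.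

Lemma det_norm1 w : (0 < N)%N -> \det (Gmx V w) != 0 -> 0 < norm1 w.
Proof.
move=> hN hd; rewrite lt_def norm1_ge0 andbT; apply: contra hd => /eqP h0.
have w0 : w = 0 *: w.
  apply/matrixP => i j; rewrite (ord1 i) !mxE mul0r.
  have := psumr_eq0P (P := xpredT) (fun i _ => normr_ge0 (w 0 i)) h0 (i := j) erefl.
  by move/eqP; rewrite normr_eq0 => /eqP.
by rewrite w0 detGZ expr0n eqn0Ngt hN mul0r.
Qed.

Lemma nonnegZ c (w : 'rV[R]_M) : 0 <= c -> nonneg w -> nonneg (c *: w).
Proof. by move=> c0 hw i; rewrite mxE mulr_ge0. Qed.

Lemma part1a w : (0 < N)%N -> solves1 V w -> solves2 V w.
Proof.
move=> hN [[hw hn] hmax]; split => // w' hw'.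
rewrite {2}/Efun; case: ifP => [_|/negbT d'0]; first by rewrite leey.
have d'pos : 0 < \det (Gmx V w') by rewrite lt_def d'0 Gmx_ge0.
have s'pos := det_norm1 hN d'0.
have feas : feasible1 ((norm1 w')^-1 *: w').
  split; first by apply: nonnegZ => //; rewrite invr_ge0 ltW.
  by rewrite norm1Z ger0_norm ?invr_ge0 ?ltW // mulVf // gt_eqF.
have := hmax _ feas; rewrite detGZ => hle.
have dpos : 0 < \det (Gmx V w).
  apply: lt_le_trans hle; apply: mulr_gt0 => //; apply: exprn_gt0; rewrite invr_gt0 //.
rewrite /Efun (gt_eqF dpos) lee_fin hn.
have hl : ln ((norm1 w')^-1 ^+ N * \det (Gmx V w')) <= ln (\det (Gmx V w)).
  rewrite ler_ln ?posrE //; apply: mulr_gt0 => //; apply: exprn_gt0; rewrite invr_gt0 //.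
rewrite lnM ?posrE ?exprn_gt0 ?invr_gt0 // lnXn ?invr_gt0 // lnV ?posrE // in hl.
have h2 : N%:R^-1 * ((- ln (norm1 w')) *+ N + ln (\det (Gmx V w'))) <= N%:R^-1 * ln (\det (Gmx V w)).
  by rewrite ler_pM2l // invr_gt0 ltr0n.
rewrite mulrDr invN_mul // in h2.
have := ln_le1 s'pos; rewrite !mulNr; lra.
Qed.

Lemma part1b w : (0 < N)%N -> \det (Gmx V (const_mx 1)) != 0 -> solves2 V w -> solves1 V w.
Proof.
move=> hN hex [hw hmin].
have hne : \det (Gmx V w) != 0.
  apply/negP => /eqP h0; have := hmin (const_mx 1) (fun i => ltac:(by rewrite mxE)).
  by rewrite /Efun h0 eqxx (negbTE hex) leye_eq.
have dpos : 0 < \det (Gmx V w) by rewrite lt_def hne Gmx_ge0.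
have spos := det_norm1 hN hne.
have key : forall t, 0 < t -> ln t <= (t - 1) * norm1 w.
  move=> t t0; have := hmin (t *: w) (nonnegZ (ltW t0) hw).
  have hdt : \det (Gmx V (t *: w)) != 0.
    by rewrite detGZ mulf_neq0 // expf_neq0 // gt_eqF.
  rewrite /Efun (negbTE hne) (negbTE hdt) lee_fin detGZ lnM ?posrE ?exprn_gt0 //.
  rewrite lnXn // norm1Z (ger0_norm (ltW t0)) !mulNr mulrDr invN_mul //; lra.
have h1 : ln (norm1 w)^-1 <= ((norm1 w)^-1 - 1) * norm1 w by apply: key; rewrite invr_gt0.
rewrite lnV ?posrE // mulrBl mulVf ?gt_eqF // mul1r in h1.
have hs1 : norm1 w = 1.
  have r0 : 0 < Num.sqrt (norm1 w) by rewrite sqrtr_gt0.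
  have sr : norm1 w = Num.sqrt (norm1 w) * Num.sqrt (norm1 w).
    by rewrite -expr2 sqr_sqrtr // ltW.
  have hl : ln (norm1 w) = ln (Num.sqrt (norm1 w)) + ln (Num.sqrt (norm1 w)).
    by rewrite {1}sr lnM ?posrE.
  have hr := ln_le1 r0.
  move: sr hl hr r0; set r := Num.sqrt (norm1 w) => sr hl hr r0.
  have hsq : (r - 1) ^+ 2 <= 0 by rewrite sqrrB1; lra.
  have : (r - 1) ^+ 2 = 0 by apply/le_anti; rewrite hsq sqr_ge0.
  move/eqP; rewrite sqrf_eq0 subr_eq0 => /eqP r1.
  by rewrite sr r1 mulr1.
split; first by split.
move=> w' [hw' hn'].
have [->|d'n] := eqVneq (\det (Gmx V w')) 0; first exact: ltW.
have d'pos : 0 < \det (Gmx V w') by rewrite lt_def d'n Gmx_ge0.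
have := hmin w' hw'; rewrite /Efun (negbTE hne) (negbTE d'n) lee_fin hn' hs1 => h.
rewrite -ler_ln ?posrE //.
have h3 : N%:R^-1 * ln (\det (Gmx V w')) <= N%:R^-1 * ln (\det (Gmx V w)).
  by rewrite !mulNr in h; lra.
by rewrite ler_pM2l ?invr_gt0 ?ltr0n in h3.
Qed.

Lemma hex : \rank V = N -> \det (Gmx V (const_mx 1)) != 0.
Proof.
move=> hr; rewrite /Gmx diag_const_mx mulmx1.
apply/negP => /det0P [v vn0 hv].
have hu : (v *m V^T) *m V = 0 by rewrite -mulmxA.
have uu : (v *m V^T) *m (v *m V^T)^T = 0.
  by rewrite trmx_mul trmxK mulmxA hu mul0mx.
have u0 : v *m V^T = 0.
  move: (v *m V^T) uu => u uu.
  have hs : \sum_k u 0 k * u 0 k = 0.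
    have h := congr1 (fun A : 'M[R]_1 => A 0 0) uu; rewrite /= !mxE in h.
    by apply: etrans h; apply: eq_bigr => k _; rewrite mxE.
  by apply/matrixP => i j; rewrite (ord1 i) [RHS]mxE; exact: (sqsum0 hs j).
have hf : row_free V^T by rewrite /row_free mxrank_tr hr.
by move: u0 => /eqP; rewrite (mulmx_free_eq0 _ hf) (negbTE vn0).
Qed.

Lemma sqv_nonneg (z : 'rV[R]_M) : nonneg (sqv z).
Proof. by move=> i; rewrite mxE sqr_ge0. Qed.

Lemma sqv_sqrt (w : 'rV[R]_M) : nonneg w -> sqv (\row_i Num.sqrt (w 0 i)) = w.
Proof. by move=> hw; apply/matrixP => i j; rewrite (ord1 i) !mxE sqr_sqrtr. Qed.

Lemma part2 z : solves3 V z <-> solves2 V (sqv z).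
Proof.
split.
  move=> h; split; first exact: sqv_nonneg.
  by move=> w' hw'; rewrite -(sqv_sqrt hw'); exact: h.
by case=> _ h z'; exact: h _ (sqv_nonneg z').
Qed.

End Aux.

Theorem mainTheorem2 (R : realType) (n M N : nat)
  (x : 'I_M -> 'rV[R]_n) (phi : 'I_N -> 'rV[R]_n -> R) :
  injective x ->
  (0 < N)%N ->
  let V : 'M[R]_(M, N) := \matrix_(i, j) phi j (x i) in
  \rank V = N ->
  (forall w : 'rV[R]_M, nonneg w -> (solves1 V w <-> solves2 V w)) /\
  (forall z : 'rV[R]_M, solves3 V z <-> solves1 V (sqv z)) /\
  (forall w : 'rV[R]_M, (solves1 V w \/ solves2 V w) -> D_optimal V w).
Proof.
move=> _ hN V hr.
have hx := hex hr.
have P1 : forall w, nonneg w -> (solves1 V w <-> solves2 V w).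
  by move=> w _; split; [exact: part1a | exact: part1b].
split; first exact: P1.
split.
  move=> z; rewrite part2; split; [exact: part1b | exact: part1a].
by move=> w [h|h] //; exact: part1b.
Qed.
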